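(* Let $R$ be an integral domain, $M$ an $R$-module, and $\mathrm{Tor}(M)$ its $R$-torsion submodule. Then $\mathbb{P}(M)=\mathbb{P}(\mathrm{Tor}(M))\sqcup\mathbb{P}(M/\mathrm{Tor}(M))$, in the following sense: $\mathbb{P}(M)$ is the disjoint union of the set $\mathbb{T}(M)$ of classes represented by nonzero torsion elements and the set $\mathbb{F}(M)$ of classes represented by non-torsion elements; the inclusion $\mathrm{Tor}(M)\to M$ induces a bijection $\mathbb{P}(\mathrm{Tor}(M))\to\mathbb{T}(M)$; and $[a]\mapsto[\bar a]$, with $\bar a$ the image of $a$ in $M/\mathrm{Tor}(M)$, is a bijection $\mathbb{F}(M)\to\mathbb{P}(M/\mathrm{Tor}(M))$.
   Context: For an $R$-module $N$ let $N^\circ=N\setminus\{0\}$; define $x\sim'y$ on $N^\circ$ if there exist $m\in N$ and $r,s\in R$ with $x=rm$, $y=sm$; let $\sim$ be the equivalence relation generated by $\sim'$; and let $\mathbb{P}(N)=N^\circ/\sim$, with $[x]$ the class of $x$. An element is $R$-torsion if it is annihilated by some nonzero element of $R$. *)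

(* Defs.v *)
From HB Require Import structures.
From mathcomp Require Import all_boot all_order all_algebra.
From mathcomp Require Import boolp classical_sets functions.
From Stdlib Require Import Relations.Relation_Operators.
Set Implicit Arguments. Unset Strict Implicit. Unset Printing Implicit Defensive.
Import GRing.Theory.
Local Open Scope ring_scope.
Local Open Scope classical_set_scope.

Section Proj.
Variables (R : nzRingType) (N : lmodType R).

Definition simrel (x y : N) : Prop :=
  x != 0 /\ y != 0 /\ exists (m : N) (r s : R), x = r *: m /\ y = s *: m.

Definition projeq (x y : N) : Prop := clos_refl_sym_trans N simrel x y.

Definition pclass (x : N) : set N := [set y | y != 0 /\ projeq x y].

Definition PP : set (set N) := [set C | exists2 x : N, x != 0 & C = pclass x].

Definition torsion (x : N) : Prop := exists r : R, r != 0 /\ r *: x = 0.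

Definition TT : set (set N) :=
  [set C | exists2 x : N, x != 0 /\ torsion x & C = pclass x].

Definition FF : set (set N) := [set C | exists2 x : N, ~ torsion x & C = pclass x].
End Proj.

(* The map on classes induced by f : U -> V, [x] |-> [f x]
   (defined choice-free as the union of the [f x] over x in the class). *)
Definition induced (R : nzRingType) (U V : lmodType R) (f : U -> V)
  (C : set U) : set V := \bigcup_(x in C) pclass (f x).

Arguments PP {R} N.
Arguments TT {R} N.
Arguments FF {R} N.

(* Main.v *)
Require Import Defs.
From HB Require Import structures.
From mathcomp Require Import all_boot all_order all_algebra.
From mathcomp Require Import boolp classical_sets functions.
From Stdlib Require Import Relations.Relation_Operators.
Import GRing.Theory.
Local Open Scope ring_scope.
Local Open Scope classical_set_scope.
Set Implicit Arguments. Unset Strict Implicit.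

Section Lemmas.
Variable R : idomainType.

Lemma torsion0 (N : lmodType R) : torsion (0 : N).
Proof. by exists 1; rewrite oner_neq0 scaler0. Qed.

Lemma simrel_sym (N : lmodType R) (x y : N) : simrel x y -> simrel y x.
Proof. by move=> [hx [hy [m [r [s [e1 e2]]]]]]; split=> //; split=> //; exists m, s, r. Qed.

Lemma simrel_tors (N : lmodType R) (x y : N) : simrel x y -> torsion x -> torsion y.
Proof.
move=> [hx [hy [m [r [s [e1 e2]]]]]] [a [a0 ha]].
rewrite e1 in hx ha; rewrite e2; rewrite e2 in hy.
have r0 : r != 0 by apply: contraNneq hx => ->; rewrite scale0r.
exists (a * r); split; first by rewrite mulf_neq0.
by rewrite scalerA mulrC -scalerA -scalerA ha scaler0.
Qed.

Lemma projeq_tors (N : lmodType R) (x y : N) : projeq x y -> (torsion x <-> torsion y).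
Proof.
elim=> {x y} [x y h|x|x y _ [h1 h2]|x y z _ [h1 h2] _ [h3 h4]].
- by split; [exact: simrel_tors | apply: simrel_tors; apply: simrel_sym].
- by [].
- by split.
- by split=> ?; [apply: h3; apply: h1 | apply: h2; apply: h4].
Qed.

Lemma projeq_sym (N : lmodType R) (x y : N) : projeq x y -> projeq y x.
Proof. by move=> h; apply: rst_sym. Qed.

Lemma projeq_trans (N : lmodType R) (x y z : N) : projeq x y -> projeq y z -> projeq x z.
Proof. by move=> h1 h2; apply: rst_trans h2. Qed.

Lemma pclass_eq (N : lmodType R) (x y : N) : projeq x y -> pclass x = pclass y.
Proof.
move=> h; rewrite /pclass; apply/seteqP; split=> z /= [z0 hz]; split=> //.
  exact: projeq_trans (projeq_sym h) hz.
exact: projeq_trans h hz.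
Qed.

Lemma pclass_mem (N : lmodType R) (x : N) : x != 0 -> pclass x x.
Proof. by move=> h; split=> //; apply: rst_refl. Qed.

Lemma projeq_map (U V : lmodType R) (f : {linear U -> V}) (G : U -> Prop) :
  (forall x y, simrel x y -> G x -> G y) ->
  (forall z, G z -> z != 0 -> f z != 0) ->
  forall a b, projeq a b -> (G a <-> G b) /\ (G a -> projeq (f a) (f b)).
Proof.
move=> Ginv Gf a b; elim=> {a b} [x y h|x|x y _ [h1 h2]|x y z _ [h1 h2] _ [h3 h4]].
- split; first by split; [exact: Ginv | apply: Ginv; apply: simrel_sym].
  move=> gx; apply: rst_step.
  case: h => [hx [hy [m [r [s [e1 e2]]]]]].
  split; first exact: Gf.
  split; first by apply: Gf => //; apply: Ginv gx; split=> //; split=> //; exists m, r, s.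
  by exists (f m), r, s; rewrite e1 e2 !linearZ_LR.
- by split=> // _; apply: rst_refl.
- split; first by split=> ?; apply/h1.
  by move=> ga; apply: projeq_sym; apply: h2; apply/h1.
- split; first by split=> ?; [apply/h3; apply/h1 | apply/h1; apply/h3].
  by move=> ga; apply: projeq_trans (h2 ga) (h4 (h1.1 ga)).
Qed.

Lemma induced_pclass (U V : lmodType R) (f : {linear U -> V}) (G : U -> Prop) :
  (forall x y, simrel x y -> G x -> G y) ->
  (forall z, G z -> z != 0 -> f z != 0) ->
  forall a, a != 0 -> G a -> induced f (pclass a) = pclass (f a).
Proof.
move=> Ginv Gf a a0 ga; apply/seteqP; split.
  move=> y [x [x0 hx] [y0 hy]]; split=> //.
  have [h1 h2] := projeq_map Ginv Gf hx.
  exact: projeq_trans (h2 ga) hy.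
by move=> y hy; exists a => //; apply: pclass_mem.
Qed.

End Lemmas.

Theorem theorem4p17 (R : idomainType) (M T Q : lmodType R)
  (i : {linear T -> M}) (p : {linear M -> Q}) :
  injective i ->
  (forall x : M, torsion x <-> exists t : T, x = i t) ->
  (forall q : Q, exists m : M, p m = q) ->
  (forall x : M, p x = 0 <-> torsion x) ->
  [/\ PP M = TT M `|` FF M,
      TT M `&` FF M = set0,
      set_bij (PP T) (TT M) (induced i)
    & set_bij (FF M) (PP Q) (induced p)].
Proof.
move=> iinj itor psurj pker.
have i0 : forall t, t != 0 -> i t != 0.
  by move=> t; apply: contra_neq; rewrite -(linear0 i); apply: iinj.
have Ginvi : forall x y : T, simrel x y -> True -> True by [].
have Gfi : forall z : T, True -> z != 0 -> i z != 0 by move=> z _; apply: i0.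
have Ginvp : forall x y : M, simrel x y -> ~ torsion x -> ~ torsion y.
  by move=> x y h nx ty; apply: nx; apply: simrel_tors ty; apply: simrel_sym.
have Gfp : forall z : M, ~ torsion z -> z != 0 -> p z != 0.
  by move=> z nz _; apply/eqP => /pker.
split.
- apply/seteqP; split.
    move=> C [x x0 ->]; have [tx|ntx] := pselect (torsion x).
      by left; exists x.
    by right; exists x.
  move=> C [[x [x0 _] ->]|[x nx ->]]; exists x => //.
  by apply: contra_notN nx => /eqP ->; apply: torsion0.
- apply/seteqP; split=> // C [[x [x0 tx] ->] [y ny e]].
  apply: ny; have : pclass x x by apply: pclass_mem.
  rewrite e => -[_ h]; exact/(projeq_tors h).
- split.
  + move=> C [t t0 ->]; rewrite (induced_pclass Ginvi Gfi t0 I).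
    by exists (i t) => //; split; [exact: i0 | apply/itor; exists t].
  + move=> C1 C2; rewrite !inE => -[t1 t10 ->] [t2 t20 ->].
    rewrite (induced_pclass Ginvi Gfi t10 I) (induced_pclass Ginvi Gfi t20 I) => e.
    apply: pclass_eq.
    have : pclass (i t2) (i t1) by rewrite -e; apply: pclass_mem; apply: i0.
    move=> [_ h].
    suff key : forall x y : M, projeq x y -> forall tx ty, x = i tx -> y = i ty -> projeq tx ty.
      by apply: projeq_sym; apply: key h _ _ erefl erefl.
    move=> x y; elim=> {x y} [x y hs|x|x y _ IH|x y z hxy IH1 _ IH2] tx ty ex ey.
    * move: (hs) => [hx [hy [m [r [s [e1 e2]]]]]].
      have r0 : r != 0 by apply: contraNneq hx => h0; rewrite e1 h0 scale0r.
      have tm : torsion m.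
        have [a [a0 ha]] : torsion x by apply/itor; exists tx.
        exists (a * r); split; first by rewrite mulf_neq0.
        by rewrite -scalerA -e1.
      have [m' em] := (itor m).1 tm.
      apply: rst_step; split.
        by apply: contraNneq hx => t0; rewrite ex t0 linear0.
      split; first by apply: contraNneq hy => t0; rewrite ey t0 linear0.
      exists m', r, s; split; apply: iinj; by rewrite linearZ_LR -em -?ex -?ey.
    * have E : tx = ty by apply: iinj; rewrite -ex -ey.
      by rewrite E; apply: rst_refl.
    * by apply: projeq_sym; apply: IH.
    * have ty' : torsion y by apply/(projeq_tors hxy); apply/itor; exists tx.
      have [t' et'] := (itor y).1 ty'.
      exact: projeq_trans (IH1 _ _ ex et') (IH2 _ _ et' ey).
  + move=> C [x [x0 tx] ->].
    have [t et] := (itor x).1 tx.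
    have t0 : t != 0 by apply: contraNneq x0 => e0; rewrite et e0 linear0.
    exists (pclass t); first by exists t.
    by rewrite (induced_pclass Ginvi Gfi t0 I) et.
- have nz : forall x : M, ~ torsion x -> x != 0.
    by move=> x nx; apply: contra_notN nx => /eqP ->; apply: torsion0.
  have same : forall a b : M, ~ torsion a -> ~ torsion b -> p a = p b -> projeq a b.
    move=> a b na nb e.
    have [c [c0 hc]] : torsion (a - b) by apply/pker; rewrite linearB e subrr.
    have ca : c *: a = c *: b by apply/eqP; rewrite -subr_eq0 -scalerBr hc.
    have nca : c *: a != 0.
      apply/eqP => h; apply: na; by exists c.
    have ncb : c *: b != 0 by rewrite -ca.
    apply: (@rst_trans _ _ _ (c *: a)).
      apply: rst_step; split; first exact: nz.
      by split=> //; exists a, 1, c; rewrite scale1r.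
    rewrite ca; apply: rst_sym; apply: rst_step; split; first exact: nz.
    by split=> //; exists b, 1, c; rewrite scale1r.
  have ptors : forall a : M, ~ torsion a -> ~ torsion (p a).
    move=> a na [c [c0 hc]]; apply: na.
    have [d [d0 hd]] : torsion (c *: a) by apply/pker; rewrite linearZ_LR.
    exists (d * c); split; first by rewrite mulf_neq0.
    by rewrite -scalerA.
  split.
  + move=> C [x nx ->]; rewrite (induced_pclass Ginvp Gfp (nz _ nx) nx).
    by exists (p x) => //; apply: Gfp nx (nz _ nx).
  + move=> C1 C2; rewrite !inE => -[x1 n1 ->] [x2 n2 ->].
    rewrite (induced_pclass Ginvp Gfp (nz _ n1) n1) (induced_pclass Ginvp Gfp (nz _ n2) n2) => e.
    apply: pclass_eq.
    have : pclass (p x2) (p x1) by rewrite -e; apply: pclass_mem; apply: Gfp n1 (nz _ n1).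
    move=> [_ h].
    suff key : forall q1 q2 : Q, projeq q1 q2 -> forall a b, ~ torsion a -> ~ torsion b ->
        p a = q1 -> p b = q2 -> projeq a b.
      by apply: projeq_sym; apply: key h _ _ n2 n1 erefl erefl.
    move=> q1 q2; elim=> {q1 q2} [q1 q2 hs|q|q1 q2 _ IH|q1 q2 q3 h12 IH1 _ IH2] a b na nb ea eb.
    * move: hs => [hq1 [hq2 [n [r [s [e1 e2]]]]]].
      have [m em] := psurj n.
      have nrm : ~ torsion (r *: m).
        move=> /pker => h0; move/eqP: hq1; apply; rewrite e1 -em; rewrite -h0; exact: (esym (linearZ_LR p r m)).
      have nsm : ~ torsion (s *: m).
        move=> /pker => h0; move/eqP: hq2; apply; rewrite e2 -em; rewrite -h0; exact: (esym (linearZ_LR p s m)).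
      apply: (projeq_trans (y := r *: m)).
        apply: same => //; rewrite ea e1 -em; exact: (esym (linearZ_LR p r m)).
      apply: (projeq_trans (y := s *: m)); last first.
        apply: same => //; rewrite eb e2 -em; exact: (linearZ_LR p s m).
      apply: rst_step; split; first exact: nz.
      by split; [exact: nz | exists m, r, s].
    * by apply: same => //; congruence.
    * by apply: projeq_sym; apply: IH.
    * have nq2 : ~ torsion q2.
        by move=> t2; apply: (ptors a na); rewrite ea; apply/(projeq_tors h12).
      have [m em] := psurj q2.
      have nm : ~ torsion m.
        move=> /pker; rewrite em => e0; apply: nq2; rewrite e0; exact: torsion0.
      exact: projeq_trans (IH1 _ _ na nm ea em) (IH2 _ _ nm nb em eb).
  + move=> C [q q0 ->].
    have [m em] := psurj q.
    have nm : ~ torsion m.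
      move=> /pker; rewrite em => h0; move/eqP: q0; apply; exact: h0.
    exists (pclass m); first by exists m.
    by rewrite (induced_pclass Ginvp Gfp (nz _ nm) nm) em.
Qed.
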